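(* Let $n\geq 1$ and $\mathfrak g=sl(n+1,\mathbb C)$. For $(p,q)=(p_1,\dots,p_n,q_1,\dots,q_n)\in\mathbb C^{2n}$ let $$\Psi(p,q)=\begin{pmatrix}-\sum_{j=1}^n p_jq_j & q_1&\cdots&q_n\\ -p_1\sum_{j=1}^n p_jq_j & p_1q_1&\cdots&p_1q_n\\ \vdots&\vdots&&\vdots\\ -p_n\sum_{j=1}^n p_jq_j& p_nq_1&\cdots&p_nq_n\end{pmatrix},$$ and for $X\in\mathfrak g$ let $\tilde X\in\mathbb C[p,q]$ be the polynomial $\tilde X(p,q)=\operatorname{Tr}(\Psi(p,q)X)$. Then: (1) for all $X,Y\in\mathfrak g$, $[\tilde X,\tilde Y]_\ast=\{\tilde X,\tilde Y\}=\widetilde{[X,Y]}$; (2) the map $\rho_0:X\mapsto W(i\tilde X)$ is a representation of $\mathfrak g$ on $\mathcal P$, i.e. $\rho_0$ is linear and $\rho_0([X,Y])=\rho_0(X)\rho_0(Y)-\rho_0(Y)\rho_0(X)$ for all $X,Y\in\mathfrak g$.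
   Context: Write $x=(x_1,\dots,x_{2n})=(p_1,\dots,p_n,q_1,\dots,q_n)$ and let $\Lambda^{ij}$ ($1\le i,j\le 2n$) be given by $\Lambda^{k,n+k}=1$, $\Lambda^{n+k,k}=-1$ for $1\le k\le n$, and $\Lambda^{ij}=0$ otherwise. For polynomials $u,v\in\mathbb C[p,q]$ set $P^0(u,v)=uv$ and for $l\ge1$, $P^l(u,v)=\sum \Lambda^{i_1j_1}\cdots\Lambda^{i_lj_l}\,\partial^l_{x_{i_1}\cdots x_{i_l}}u\;\partial^l_{x_{j_1}\cdots x_{j_l}}v$ (sum over all $i_1,\dots,i_l,j_1,\dots,j_l\in\{1,\dots,2n\}$). The Poisson bracket is $\{u,v\}=P^1(u,v)=\sum_{k=1}^n(\partial_{p_k}u\,\partial_{q_k}v-\partial_{q_k}u\,\partial_{p_k}v)$. The Moyal bracket (at parameter $t=-i/2$) is $[u,v]_\ast=\sum_{l\ge0}\frac{(-1/4)^l}{(2l+1)!}P^{2l+1}(u,v)$. $\mathcal P=\mathbb C[p_1,\dots,p_n]$ is the space of complex polynomials in $p$. The Weyl correspondence $W$ assigns to each polynomial in $(p,q)$ a linear operator on $\mathcal P$, defined by linearity from: for a polynomial $u(p)$ and a multi-index $\alpha\in\mathbb N^n$, $(W(u(p)q^\alpha)\varphi)(p)=\big(i\partial_s\big)^{\alpha}\big(u(p+\tfrac12 s)\varphi(p+s)\big)\big|_{s=0}$, where $s=(s_1,\dots,s_n)$ and $(i\partial_s)^\alpha=\prod_k (i\partial_{s_k})^{\alpha_k}$.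 *)

(* Defs.v *)
From HB Require Import structures.
From mathcomp Require Import all_boot all_order all_algebra.
From mathcomp Require Import mpoly.
Set Implicit Arguments. Unset Strict Implicit. Unset Printing Implicit Defensive.
Import Order.TTheory GRing.Theory Num.Theory.
Local Open Scope ring_scope.

Section Defs.
Variables (C : numClosedFieldType) (n : nat).

(* Polynomials in x = (p_1..p_n, q_1..q_n): variable lshift n k is p_(k+1),
   variable rshift n k is q_(k+1). *)
Notation PQ := {mpoly C[n + n]}.
Notation Pn := {mpoly C[n]}.

Definition Lam (i j : 'I_(n + n)) : C :=
  match split i, split j with
  | inl a, inr b => (a == b)%:R
  | inr a, inl b => - (a == b)%:R
  | _, _ => 0
  end.

Definition dpart (l : nat) (I : l.-tuple 'I_(n + n)) (u : PQ) : PQ :=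
  foldr (fun i p => mderiv i p) u I.

Definition Pl (l : nat) (u v : PQ) : PQ :=
  \sum_(I : l.-tuple 'I_(n + n)) \sum_(J : l.-tuple 'I_(n + n))
     (\prod_(k < l) Lam (tnth I k) (tnth J k)) *: (dpart I u * dpart J v).

Definition Poisson (u v : PQ) : PQ := Pl 1 u v.

(* Moyal bracket at t = -i/2: sum_{l>=0} (-1/4)^l/(2l+1)! P^{2l+1}(u,v).
   All terms with 2l+1 > deg u vanish, so the (finite) sum is truncated at
   l < msize u + msize v, which contains every possibly non-zero term. *)
Definition Moyal (u v : PQ) : PQ :=
  \sum_(l < msize u + msize v)
     (((- (4%:R : C)^-1) ^+ l) / ((2 * l + 1)`!)%:R) *: Pl (2 * l + 1) u v.

Definition ppart (m : 'X_{1..n + n}) : 'X_{1..n} :=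
  [multinom m (lshift n k) | k < n].
Definition qpart (m : 'X_{1..n + n}) : 'X_{1..n} :=
  [multinom m (rshift n k) | k < n].

(* Weyl correspondence on a monomial p^a q^alpha, acting on phi, computed in
   the auxiliary ring C[p,s] (variable lshift n k = p_(k+1),
   rshift n k = s_(k+1)):
   (i d_s)^alpha ( (p + s/2)^a phi(p + s) ) |_{s = 0}. *)
Definition WeylMon (m : 'X_{1..n + n}) (phi : Pn) : Pn :=
  let half := [tuple ('X_(lshift n k) + (2%:R : C)^-1 *: 'X_(rshift n k) : PQ)
               | k < n] in
  let full := [tuple ('X_(lshift n k) + 'X_(rshift n k) : PQ) | k < n] in
  let G : PQ := ('X_[ppart m] \mPo half) * (phi \mPo full) in
  let ds : 'X_{1..n + n} :=
    [multinom (match split j with inl _ => 0%N | inr k => qpart m k end)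
     | j < n + n] in
  let D : PQ := ('i ^+ mdeg (qpart m)) *: mderivm ds G in
  let s0 := [tuple (match split j with inl k => 'X_k | inr _ => 0 end : Pn)
             | j < n + n] in
  D \mPo s0.

Definition Weyl (u : PQ) (phi : Pn) : Pn :=
  \sum_(m <- msupp u) u@_m *: WeylMon m phi.

Definition psi_col (i : 'I_n.+1) : PQ :=
  if unlift ord0 i is Some k then 'X_(lshift n k) else 1.
Definition psi_row (j : 'I_n.+1) : PQ :=
  if unlift ord0 j is Some k then 'X_(rshift n k)
  else - \sum_(k < n) 'X_(lshift n k) * 'X_(rshift n k).
Definition Psi : 'M[PQ]_n.+1 := \matrix_(i, j) (psi_col i * psi_row j).

Definition tilde (X : 'M[C]_n.+1) : PQ :=
  \tr (Psi *m map_mx (fun c => c%:MP) X).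

Definition rho0 (X : 'M[C]_n.+1) : Pn -> Pn := Weyl ('i *: tilde X).

End Defs.

(* Main.v *)
Require Import Defs.
From HB Require Import structures.
From mathcomp Require Import all_boot all_order all_algebra.
From mathcomp Require Import mpoly.
From mathcomp Require Import ring zify.
Import Order.TTheory GRing.Theory Num.Theory.
Local Open Scope ring_scope.

Module Aux.
Set Implicit Arguments. Unset Strict Implicit. Unset Printing Implicit Defensive.

Section Gen.
Variable (R : comNzRingType).

Lemma mpoly_ind_ring (k : nat) (P : {mpoly R[k]} -> Prop) :
  (forall c, P c%:MP) -> (forall i, P 'X_i) ->
  (forall p q, P p -> P q -> P (p + q)) ->
  (forall p q, P p -> P q -> P (p * q)) -> forall p, P p.
Proof.
move=> HC HX HD HM p; rewrite (mpolyE p).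
apply: (big_ind P); first by rewrite -mpolyC0.
  exact: HD.
move=> m _; rewrite -mul_mpolyC; apply: (HM) => //.
rewrite mpolyXE_id; apply: (big_ind P); first by rewrite -mpolyC1.
  exact: HM.
move=> i _; elim: (m i) => [|e IH]; first by rewrite expr0 -mpolyC1.
by rewrite exprS; apply: (HM).
Qed.

Lemma mderivXU (k : nat) (i j : 'I_k) :
  mderiv j ('X_i : {mpoly R[k]}) = (i == j)%:R.
Proof.
rewrite mderivX mnm1E; case: eqP => [->|_]; last by rewrite scale0r.
have -> : (U_(j) - U_(j))%MM = 0%MM by apply/mnmP => l; rewrite mnmBE subnn mnm0E.
by rewrite mpolyX0 scale1r.
Qed.

Lemma chain_rule (k k' : nat) (lq : k.-tuple {mpoly R[k']}) (j : 'I_k') p :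
  mderiv j (p \mPo lq) = \sum_(i < k) (mderiv i p \mPo lq) * mderiv j (tnth lq i).
Proof.
elim/mpoly_ind_ring: p.
- move=> c; rewrite comp_mpolyC mderivC big1 // => i _.
  by rewrite mderivC comp_mpoly0 mul0r.
- move=> i; rewrite comp_mpolyXU -tnth_nth (bigD1 i) //= big1 => [|i' ne].
    by rewrite mderivXU eqxx comp_mpoly1 mul1r addr0.
  by rewrite mderivXU eq_sym (negbTE ne) comp_mpoly0 mul0r.
- move=> p q Hp Hq; rewrite comp_mpolyD mderivD Hp Hq -big_split /=.
  by apply: eq_bigr => i _; rewrite mderivD comp_mpolyD mulrDl.
- move=> p q Hp Hq; rewrite rmorphM /= mderivM Hp Hq mulr_suml mulr_sumr -big_split /=.
  by apply: eq_bigr => i _; rewrite mderivM comp_mpolyD !rmorphM /=; ring.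
Qed.

Lemma comp_comp (k k' k'' : nat) (lq : k.-tuple {mpoly R[k']})
  (lr : k'.-tuple {mpoly R[k'']}) p :
  (p \mPo lq) \mPo lr = p \mPo [tuple (tnth lq i) \mPo lr | i < k].
Proof.
elim/mpoly_ind_ring: p.
- by move=> c; rewrite !comp_mpolyC.
- by move=> i; rewrite !comp_mpolyXU -!tnth_nth tnth_mktuple.
- by move=> p q Hp Hq; rewrite !comp_mpolyD Hp Hq.
- by move=> p q Hp Hq; rewrite !rmorphM /= Hp Hq.
Qed.

End Gen.


Section W.
Variables (C : numClosedFieldType) (n : nat).
Notation PQ := {mpoly C[n + n]}.
Notation Pn := {mpoly C[n]}.
Implicit Types phi : Pn.

Lemma split_l (i : 'I_n) : split (lshift n i) = inl i.
Proof. exact: (unsplitK (inl _ : 'I_n + 'I_n)). Qed.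
Lemma split_r (i : 'I_n) : split (rshift n i) = inr i.
Proof. exact: (unsplitK (inr _ : 'I_n + 'I_n)). Qed.

Lemma split_cases (P : 'I_(n + n) -> Prop) :
  (forall a, P (lshift n a)) -> (forall b, P (rshift n b)) -> forall j, P j.
Proof. by move=> Hl Hr j; rewrite -(splitK j); case: (split j) => a /=. Qed.

Lemma Weyl_seq (u : PQ) phi (s : seq 'X_{1..n + n}) :
  uniq s -> {subset msupp u <= s} ->
  Weyl u phi = \sum_(m <- s) u@_m *: WeylMon m phi.
Proof.
move=> us sub; rewrite /Weyl [RHS](bigID (fun m => m \in msupp u)) /=.
rewrite [X in _ + X]big1 ?addr0; last first.
  by move=> m /memN_msupp_eq0 ->; rewrite scale0r.
rewrite -[RHS]big_filter; apply: perm_big; apply: uniq_perm.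
- exact: msupp_uniq.
- exact: filter_uniq.
move=> m; rewrite mem_filter; case: (boolP (m \in msupp u)) => //= /sub -> //.
Qed.

Lemma Weyl_lin (a : C) (u v : PQ) phi :
  Weyl (a *: u + v) phi = a *: Weyl u phi + Weyl v phi.
Proof.
have us := undup_uniq (msupp u ++ msupp v).
have s1 : {subset msupp u <= undup (msupp u ++ msupp v)}.
  by move=> m mu; rewrite mem_undup mem_cat mu.
have s2 : {subset msupp v <= undup (msupp u ++ msupp v)}.
  by move=> m mv; rewrite mem_undup mem_cat mv orbT.
have s3 : {subset msupp (a *: u + v) <= undup (msupp u ++ msupp v)}.
  move=> m /msuppD_le; rewrite mem_undup !mem_cat => /orP[/msuppZ_le->|->] //.
  by rewrite orbT.
rewrite (Weyl_seq _ us s1) (Weyl_seq _ us s2) (Weyl_seq _ us s3).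
rewrite scaler_sumr -big_split /=; apply: eq_bigr => m _.
by rewrite mcoeffD mcoeffZ scalerDl scalerA.
Qed.

Lemma Weyl0 phi : Weyl 0 phi = 0.
Proof. by rewrite /Weyl msupp0 big_nil. Qed.

Lemma Weyl_add (u v : PQ) phi : Weyl (u + v) phi = Weyl u phi + Weyl v phi.
Proof. by have := Weyl_lin 1 u v phi; rewrite !scale1r. Qed.

Lemma Weyl_scale (a : C) (u : PQ) phi : Weyl (a *: u) phi = a *: Weyl u phi.
Proof. by have := Weyl_lin a u 0 phi; rewrite !addr0 Weyl0 addr0. Qed.

Lemma Weyl_opp (u : PQ) phi : Weyl (- u) phi = - Weyl u phi.
Proof. by rewrite -scaleN1r Weyl_scale scaleN1r. Qed.

Lemma Weyl_sum I (r : seq I) (P : pred I) (F : I -> PQ) phi :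
  Weyl (\sum_(i <- r | P i) F i) phi = \sum_(i <- r | P i) Weyl (F i) phi.
Proof.
by apply: (big_morph (fun u => Weyl u phi)) => [u v|]; rewrite ?Weyl_add ?Weyl0.
Qed.

Lemma Weyl_X m phi : Weyl 'X_[m] phi = WeylMon m phi.
Proof. by rewrite /Weyl msuppX big_seq1 mcoeffX eqxx scale1r. Qed.


Definition hf : n.-tuple PQ := [tuple ('X_(lshift n k) + (2%:R : C)^-1 *: 'X_(rshift n k) : PQ) | k < n].
Definition fl : n.-tuple PQ := [tuple ('X_(lshift n k) + 'X_(rshift n k) : PQ) | k < n].
Definition s0 : (n + n).-tuple Pn := [tuple (match split j with inl k => 'X_k | inr _ => 0 end : Pn) | j < n + n].

Lemma hf_s0 (psi : Pn) : (psi \mPo hf) \mPo s0 = psi.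
Proof.
rewrite comp_comp -[RHS]comp_mpoly_id; congr (_ \mPo _).
apply: eq_from_tnth => i; rewrite !tnth_mktuple comp_mpolyD comp_mpolyZ !comp_mpolyXU.
by rewrite -!tnth_nth !tnth_mktuple split_l split_r scaler0 addr0.
Qed.

Lemma fl_s0 (psi : Pn) : (psi \mPo fl) \mPo s0 = psi.
Proof.
rewrite comp_comp -[RHS]comp_mpoly_id; congr (_ \mPo _).
apply: eq_from_tnth => i; rewrite !tnth_mktuple comp_mpolyD !comp_mpolyXU.
by rewrite -!tnth_nth !tnth_mktuple split_l split_r addr0.
Qed.

Lemma hf_deriv (psi : Pn) k :
  mderiv (rshift n k) (psi \mPo hf) = (2%:R : C)^-1 *: (mderiv k psi \mPo hf).
Proof.
rewrite chain_rule (bigD1 k) //= big1 => [|i /negbTE ne].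
  rewrite tnth_mktuple mderivD mderivZ !mderivXU eq_lrshift eqxx add0r addr0.
  by rewrite -scalerAr mulr1.
rewrite tnth_mktuple mderivD mderivZ !mderivXU eq_lrshift eq_rshift ne.
by rewrite scaler0 addr0 mulr0.
Qed.

Lemma fl_deriv (psi : Pn) k :
  mderiv (rshift n k) (psi \mPo fl) = mderiv k psi \mPo fl.
Proof.
rewrite chain_rule (bigD1 k) //= big1 => [|i /negbTE ne].
  by rewrite tnth_mktuple mderivD !mderivXU eq_lrshift eqxx add0r /= mulr1 addr0.
rewrite tnth_mktuple mderivD !mderivXU eq_lrshift eq_rshift ne.
by rewrite addr0 mulr0.
Qed.

Lemma WeylMon_q m (k : 'I_n) phi : qpart m = U_(k)%MM ->
  WeylMon m phi = 'i *: ((2%:R : C)^-1 *: (mderiv k 'X_[ppart m] * phi)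
                         + 'X_[ppart m] * mderiv k phi).
Proof.
move=> hq; rewrite /WeylMon; cbv zeta; rewrite -/hf -/fl -/s0 hq mdeg1 expr1.
have -> : [multinom (match split j with inl _ => 0%N | inr k0 => U_(k)%MM k0 end)
          | j < n + n] = U_(rshift n k)%MM.
  apply/mnmP; elim/split_cases => a; rewrite mnmE mnm1E ?split_l ?split_r //=.
    by rewrite eq_sym eq_lrshift.
  by rewrite mnm1E eq_rshift.
rewrite mderivmU1m mderivM hf_deriv fl_deriv comp_mpolyZ comp_mpolyD !rmorphM /=.
rewrite comp_mpolyZ !hf_s0 !fl_s0; congr (_ *: (_ + _)).
by rewrite mpoly_scaleAl.
Qed.

End W.


Section W2.
Variables (C : numClosedFieldType) (n : nat).
Notation PQ := {mpoly C[n + n]}.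
Notation Pn := {mpoly C[n]}.
Implicit Types phi : Pn.

Lemma ppart_l (a : 'I_n) : ppart (U_(lshift n a))%MM = U_(a)%MM.
Proof. by apply/mnmP => k; rewrite mnmE !mnm1E eq_lshift. Qed.
Lemma ppart_r (a : 'I_n) : ppart (U_(rshift n a))%MM = 0%MM.
Proof. by apply/mnmP => k; rewrite mnmE !mnm1E mnm0E eq_sym eq_lrshift. Qed.
Lemma qpart_l (a : 'I_n) : qpart (U_(lshift n a))%MM = 0%MM.
Proof. by apply/mnmP => k; rewrite mnmE !mnm1E mnm0E eq_lrshift. Qed.
Lemma qpart_r (a : 'I_n) : qpart (U_(rshift n a))%MM = U_(a)%MM.
Proof. by apply/mnmP => k; rewrite mnmE !mnm1E eq_rshift. Qed.
Lemma ppartD (m1 m2 : 'X_{1..n + n}) : ppart (m1 + m2)%MM = (ppart m1 + ppart m2)%MM.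
Proof. by apply/mnmP => k; rewrite mnmE (mnmDE (lshift n k) m1 m2) (mnmDE k) !mnmE. Qed.
Lemma qpartD (m1 m2 : 'X_{1..n + n}) : qpart (m1 + m2)%MM = (qpart m1 + qpart m2)%MM.
Proof. by apply/mnmP => k; rewrite mnmE (mnmDE (rshift n k) m1 m2) (mnmDE k) !mnmE. Qed.

Definition hC : C := (2%:R : C)^-1.
Definition cp (i : 'I_n.+1) : Pn := if unlift ord0 i is Some a then 'X_a else 1.
Definition Dop (j : 'I_n.+1) phi : Pn :=
  if unlift ord0 j is Some b then mderiv b phi
  else - (\sum_k 'X_k * mderiv k phi + (n.+1%:R * hC)%:MP * phi).
Definition wop (i j : 'I_n.+1) phi : Pn :=
  cp i * Dop j phi + ((i == j)%:R * hC)%:MP * phi.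

Lemma scaleMP (a : C) (p : Pn) : a *: p = a%:MP * p.
Proof. by rewrite mul_mpolyC. Qed.

Lemma sum_delta (a : 'I_n) : \sum_k (a == k)%:R * 'X_k = 'X_a :> Pn.
Proof.
rewrite (bigD1 a) //= big1 => [|k /negbTE]; first by rewrite eqxx mul1r addr0.
by rewrite eq_sym => ->; rewrite mul0r.
Qed.

Lemma W3 (a k : 'I_n) phi : Weyl ('X_(lshift n a) * ('X_(lshift n k) * 'X_(rshift n k))) phi =
   'i *: ((hC%:MP * phi) * ((a == k)%:R * 'X_k) + hC%:MP * 'X_a * phi
          + 'X_a * ('X_k * mderiv k phi)).
Proof.
rewrite mulrA -!mpolyXD Weyl_X (WeylMon_q (k := k)); last first.
  by rewrite !qpartD !qpart_l !qpart_r !add0m.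
rewrite !ppartD !ppart_l ppart_r addm0 mpolyXD mderivM !mderivXU eqxx.
congr (_ *: _); rewrite !scaleMP /hC /= mulr1; ring.
Qed.

Lemma W2 (k : 'I_n) phi : Weyl ('X_(lshift n k) * 'X_(rshift n k)) phi =
   'i *: (hC%:MP * phi + 'X_k * mderiv k phi).
Proof.
rewrite -!mpolyXD Weyl_X (WeylMon_q (k := k)); last first.
  by rewrite !qpartD !qpart_l !qpart_r !add0m.
rewrite !ppartD !ppart_l ppart_r addm0 mderivXU eqxx.
congr (_ *: _); rewrite !scaleMP /hC /= mul1r; ring.
Qed.

Lemma Wll (a b : 'I_n) phi : Weyl ('X_(lshift n a) * 'X_(rshift n b)) phi =
  'i *: ('X_a * mderiv b phi + ((a == b)%:R * hC)%:MP * phi).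
Proof.
rewrite -mpolyXD Weyl_X (WeylMon_q (k := b)); last by rewrite qpartD qpart_l qpart_r add0m.
rewrite ppartD ppart_l ppart_r addm0 mderivXU.
congr (_ *: _); rewrite !scaleMP !rmorphM /= !mpolyC_nat /hC; ring.
Qed.

Lemma W0l (b : 'I_n) phi : Weyl (1 * 'X_(rshift n b)) phi =
  'i *: (1 * mderiv b phi + (false%:R * hC)%:MP * phi).
Proof.
rewrite mul1r Weyl_X (WeylMon_q (k := b)); last by rewrite qpart_r.
rewrite ppart_r mpolyX0 -mpolyC1 mderivC mul0r scaler0 add0r mpolyC1 /= mul0r mpolyC0 mul0r addr0 !mul1r.
by [].
Qed.

Lemma Wl0 (a : 'I_n) phi :
  Weyl ('X_(lshift n a) * - \sum_(k < n) 'X_(lshift n k) * 'X_(rshift n k)) phi =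
  'i *: ('X_a * - (\sum_k 'X_k * mderiv k phi + (n.+1%:R * hC)%:MP * phi) +
  (false%:R * hC)%:MP * phi).
Proof.
rewrite mulrN mulr_sumr Weyl_opp Weyl_sum.
rewrite (eq_bigr _ (fun k _ => W3 a k phi)) -scaler_sumr -scalerN; congr (_ *: _).
rewrite !big_split /= -mulr_sumr sum_delta sumr_const card_ord -mulr_sumr.
rewrite mul0r mpolyC0 rmorphM /= mpolyC_nat; ring.
Qed.

Lemma W00 phi :
  Weyl (1 * - \sum_(k < n) 'X_(lshift n k) * 'X_(rshift n k)) phi =
  'i *: (1 * - (\sum_k 'X_k * mderiv k phi + (n.+1%:R * hC)%:MP * phi) +
  (true%:R * hC)%:MP * phi).
Proof.
rewrite mul1r Weyl_opp Weyl_sum.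
rewrite (eq_bigr _ (fun k _ => W2 k phi)) -scaler_sumr -scalerN; congr (_ *: _).
rewrite !big_split /= sumr_const card_ord !rmorphM /= !mpolyC_nat mul1r; ring.
Qed.

Lemma Weyl_cr i j phi :
  Weyl (psi_col C i * psi_row C j) phi = 'i *: wop i j phi.
Proof.
rewrite /psi_col /psi_row /wop /cp /Dop.
case: (unliftP ord0 i) => [a ->|->]; case: (unliftP ord0 j) => [b ->|->].
- rewrite (inj_eq lift_inj); exact: Wll.
- rewrite eq_sym (negbTE (neq_lift _ _)); exact: Wl0.
- rewrite (negbTE (neq_lift _ _)); exact: W0l.
- rewrite eqxx; exact: W00.
Qed.


Lemma tildeE (X : 'M[C]_n.+1) :
  tilde X = \sum_i \sum_j X j i *: (psi_col C i * psi_row C j).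
Proof.
rewrite /tilde /mxtrace; apply: eq_bigr => i _; rewrite mxE.
by apply: eq_bigr => j _; rewrite /Psi !mxE mulrC mul_mpolyC.
Qed.

Lemma rho0E (X : 'M[C]_n.+1) phi :
  rho0 X phi = - \sum_i \sum_j X j i *: wop i j phi.
Proof.
rewrite /rho0 tildeE Weyl_scale Weyl_sum -sumrN scaler_sumr; apply: eq_bigr => i _.
rewrite Weyl_sum -sumrN scaler_sumr; apply: eq_bigr => j _.
rewrite Weyl_scale Weyl_cr !scalerA -scaleNr; congr (_ *: _).
by rewrite mulrC mulrA -expr2 sqrCi mulN1r.
Qed.

Lemma sum_deltaF (F : 'I_n -> Pn) b : \sum_k (k == b)%:R * F k = F b.
Proof.
rewrite (bigD1 b) //= big1 => [|k /negbTE ->]; first by rewrite eqxx mul1r addr0.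
by rewrite mul0r.
Qed.

Lemma Dop_lin j (a : C) phi psi :
  Dop j (a%:MP * phi + psi) = a%:MP * Dop j phi + Dop j psi.
Proof.
rewrite /Dop; case: (unlift ord0 j) => [b|].
  by rewrite mderivD mderiv_mulC.
have E : forall k, 'X_k * mderiv k (a%:MP * phi + psi) =
   a%:MP * ('X_k * mderiv k phi) + 'X_k * mderiv k psi.
  by move=> k; rewrite mderivD mderiv_mulC; ring.
rewrite (eq_bigr _ (fun k _ => E k)) big_split /= -mulr_sumr; ring.
Qed.

Lemma HD0 b phi :
  mderiv b (Dop ord0 phi) = Dop ord0 (mderiv b phi) - mderiv b phi.
Proof.
rewrite /Dop unlift_none mderivN mderivD raddf_sum /= mderiv_mulC.
have E : forall k, mderiv b ('X_k * mderiv k phi) =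
   (k == b)%:R * mderiv k phi + 'X_k * mderiv k (mderiv b phi).
  by move=> k; rewrite mderivM mderivXU mderiv_comm.
rewrite (eq_bigr _ (fun k _ => E k)) big_split /= sum_deltaF; ring.
Qed.

Lemma natbF : (false%:R : Pn) = 0. Proof. by []. Qed.
Lemma natbT : (true%:R : Pn) = 1. Proof. by []. Qed.

Lemma lift_neq m (h : 'I_m) i : (lift h i == h) = false.
Proof. by apply/negbTE; rewrite eq_sym neq_lift. Qed.
Lemma neq_lift' m (h : 'I_m) i : (h == lift h i) = false.
Proof. exact/negbTE/neq_lift. Qed.

Lemma R1 j k phi :
  Dop j (cp k * phi) = cp k * Dop j phi
                       + ((j == k)%:R - (j == ord0)%:R * cp k) * phi.
Proof.
rewrite /Dop /cp.
case: (unliftP ord0 j) => [b ->|->]; case: (unliftP ord0 k) => [a ->|->].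
- rewrite (inj_eq lift_inj) mderivM mderivXU lift_neq (eq_sym a b) natbF; ring.
- rewrite lift_neq !mul1r natbF; ring.
- rewrite neq_lift' eqxx.
  have E : forall kk, 'X_kk * mderiv kk ('X_a * phi) =
     (a == kk)%:R * ('X_kk * phi) + 'X_a * ('X_kk * mderiv kk phi).
    by move=> kk; rewrite mderivM mderivXU; ring.
  rewrite (eq_bigr _ (fun k _ => E k)) big_split /= -mulr_sumr.
  rewrite (eq_bigr (fun i => (a == i)%:R * 'X_i * phi)) => [|i _]; last by rewrite mulrA.
  rewrite -mulr_suml sum_delta; ring.
- rewrite eqxx !mul1r natbT; ring.
Qed.

Lemma DopL b phi : Dop (lift ord0 b) phi = mderiv b phi.
Proof. by rewrite /Dop liftK. Qed.

Lemma R2 j l phi :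
  Dop j (Dop l phi) = Dop l (Dop j phi)
     + (j == ord0)%:R * Dop l phi - (l == ord0)%:R * Dop j phi.
Proof.
case: (unliftP ord0 j) => [b ->|->]; case: (unliftP ord0 l) => [a ->|->].
- by rewrite !DopL mderiv_comm !lift_neq natbF; ring.
- rewrite !DopL HD0 lift_neq eqxx natbF natbT; ring.
- rewrite !DopL HD0 lift_neq eqxx natbF natbT; ring.
- rewrite eqxx; ring.
Qed.

Lemma Dop0 j : Dop j 0 = 0.
Proof.
rewrite /Dop; case: (unlift ord0 j) => [b|]; first exact: mderiv0.
by rewrite big1 ?mulr0 ?add0r ?oppr0 // => k _; rewrite mderiv0 mulr0.
Qed.

Lemma Dop_add j x y : Dop j (x + y) = Dop j x + Dop j y.
Proof. by have := Dop_lin j 1 x y; rewrite mpolyC1 !mul1r. Qed.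

Lemma Dop_scal j a x : Dop j (a%:MP * x) = a%:MP * Dop j x.
Proof. by have := Dop_lin j a x 0; rewrite !addr0 Dop0 addr0. Qed.

Lemma wop_comm i j k l phi :
  wop i j (wop k l phi) - wop k l (wop i j phi) =
  wop i l phi *+ (j == k) - wop k j phi *+ (l == i).
Proof.
rewrite /wop (Dop_add j (cp k * Dop l phi)) (Dop_add l (cp i * Dop j phi)).
rewrite (Dop_scal j ((k == l)%:R * hC) phi) (Dop_scal l ((i == j)%:R * hC) phi).
rewrite (R1 j k (Dop l phi)) (R1 l i (Dop j phi)) (R2 j l phi).
rewrite -(mulr_natl _ (j == k)) -(mulr_natl _ (l == i)).
rewrite !rmorphM /= !mpolyC_nat (eq_sym i l) (eq_sym k j).
ring.
Qed.

Lemma wop_lin i j (a : C) x y : wop i j (a *: x + y) = a *: wop i j x + wop i j y.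
Proof.
rewrite /wop !scaleMP Dop_lin; ring.
Qed.

Lemma wop_add i j x y : wop i j (x + y) = wop i j x + wop i j y.
Proof. by have := wop_lin i j 1 x y; rewrite !scale1r. Qed.

Lemma wop0 i j : wop i j 0 = 0.
Proof. by rewrite /wop Dop0 !mulr0 addr0. Qed.

Lemma wop_scale i j (a : C) x : wop i j (a *: x) = a *: wop i j x.
Proof. by have := wop_lin i j a x 0; rewrite !addr0 wop0 addr0. Qed.

Lemma wop_opp i j x : wop i j (- x) = - wop i j x.
Proof. by rewrite -scaleN1r wop_scale scaleN1r. Qed.

Lemma wop_sum i j I (r : seq I) (P : pred I) (F : I -> Pn) :
  wop i j (\sum_(t <- r | P t) F t) = \sum_(t <- r | P t) wop i j (F t).
Proof. by apply: (big_morph (wop i j)) => [x y|]; rewrite ?wop_add ?wop0. Qed.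

End W2.

Section Quad.
Variables (C : numClosedFieldType) (V : lmodType C) (N : nat).

Lemma quad (X Y : 'M[C]_N) (e : 'I_N -> 'I_N -> V) :
  \sum_i \sum_j \sum_k \sum_l (X j i * Y l k) *: (e i l *+ (j == k) - e k j *+ (l == i))
  = \sum_i \sum_j (Y *m X) j i *: e i j - \sum_i \sum_j (X *m Y) j i *: e i j.
Proof.
have A : \sum_i \sum_j \sum_k \sum_l (X j i * Y l k) *: (e i l *+ (j == k))
         = \sum_i \sum_j (Y *m X) j i *: e i j.
  apply: eq_bigr => i _.
  have -> : \sum_j \sum_k \sum_l (X j i * Y l k) *: (e i l *+ (j == k))
          = \sum_j \sum_l (X j i * Y l j) *: e i l.
    apply: eq_bigr => j _; rewrite exchange_big /=; apply: eq_bigr => l _.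
    rewrite (bigD1 j) //= eqxx mulr1n big1 ?addr0 // => k /negbTE.
    by rewrite eq_sym => ->; rewrite mulr0n scaler0.
  rewrite exchange_big /=; apply: eq_bigr => l _.
  rewrite -scaler_suml mxE; congr (_ *: _); apply: eq_bigr => j _; exact: mulrC.
have B : \sum_i \sum_j \sum_k \sum_l (X j i * Y l k) *: (e k j *+ (l == i))
         = \sum_i \sum_j (X *m Y) j i *: e i j.
  have -> : \sum_i \sum_j \sum_k \sum_l (X j i * Y l k) *: (e k j *+ (l == i))
          = \sum_i \sum_j \sum_k (X j i * Y i k) *: e k j.
    apply: eq_bigr => i _; apply: eq_bigr => j _; apply: eq_bigr => k _.
    rewrite (bigD1 i) //= eqxx mulr1n big1 ?addr0 // => l /negbTE ->.
    by rewrite mulr0n scaler0.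
  rewrite exchange_big /=; under eq_bigr do rewrite exchange_big /=.
  rewrite exchange_big /=; apply: eq_bigr => k _; apply: eq_bigr => j _.
  by rewrite -scaler_suml mxE.
rewrite -A -B -!sumrB; apply: eq_bigr => i _; rewrite -!sumrB.
apply: eq_bigr => j _; rewrite -!sumrB; apply: eq_bigr => k _; rewrite -!sumrB.
by apply: eq_bigr => l _; rewrite scalerBr.
Qed.

End Quad.


Section P2.
Variables (C : numClosedFieldType) (n : nat).
Notation Pn := {mpoly C[n]}.
Implicit Types phi : Pn.

Lemma swap4 (V : zmodType) N (f : 'I_N -> 'I_N -> 'I_N -> 'I_N -> V) :
  \sum_i \sum_j \sum_k \sum_l f i j k l = \sum_k \sum_l \sum_i \sum_j f i j k l.
Proof.
under eq_bigr do rewrite exchange_big /=.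
under eq_bigr do under eq_bigr do rewrite exchange_big /=.
rewrite exchange_big /=.
by under eq_bigr do rewrite exchange_big /=.
Qed.

Lemma sub4 (V : zmodType) N (f g : 'I_N -> 'I_N -> 'I_N -> 'I_N -> V) :
  \sum_i \sum_j \sum_k \sum_l f i j k l - \sum_i \sum_j \sum_k \sum_l g i j k l
  = \sum_i \sum_j \sum_k \sum_l (f i j k l - g i j k l).
Proof.
rewrite -sumrB; apply: eq_bigr => i _; rewrite -sumrB; apply: eq_bigr => j _.
rewrite -sumrB; apply: eq_bigr => k _; rewrite -sumrB; exact: eq_bigr.
Qed.

Lemma rr (X Y : 'M[C]_n.+1) phi :
  rho0 X (rho0 Y phi) =
  \sum_i \sum_j \sum_k \sum_l (X j i * Y l k) *: wop i j (wop k l phi).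
Proof.
rewrite (rho0E X) -sumrN; apply: eq_bigr => i _; rewrite -sumrN; apply: eq_bigr => j _.
rewrite rho0E wop_opp wop_sum scalerN opprK scaler_sumr; apply: eq_bigr => k _.
rewrite wop_sum scaler_sumr; apply: eq_bigr => l _.
by rewrite wop_scale scalerA.
Qed.

Lemma rr' (X Y : 'M[C]_n.+1) phi :
  rho0 Y (rho0 X phi) =
  \sum_i \sum_j \sum_k \sum_l (X j i * Y l k) *: wop k l (wop i j phi).
Proof.
rewrite rr swap4; apply: eq_bigr => i _; apply: eq_bigr => j _.
apply: eq_bigr => k _; apply: eq_bigr => l _; by rewrite mulrC.
Qed.

Lemma rho0_bracket (X Y : 'M[C]_n.+1) phi :
  rho0 (X *m Y - Y *m X) phi = rho0 X (rho0 Y phi) - rho0 Y (rho0 X phi).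
Proof.
rewrite rr rr' sub4.
under eq_bigr do under eq_bigr do under eq_bigr do under eq_bigr do
  rewrite -scalerBr wop_comm.
rewrite quad rho0E -sumrB -sumrN; apply: eq_bigr => i _.
rewrite -sumrB -sumrN; apply: eq_bigr => j _.
by rewrite !mxE scalerBl opprB.
Qed.

Lemma rho0_linphi (X : 'M[C]_n.+1) (a : C) phi psi :
  rho0 X (a *: phi + psi) = a *: rho0 X phi + rho0 X psi.
Proof.
rewrite !rho0E scalerN -opprD scaler_sumr -big_split /=; congr (- _).
apply: eq_bigr => i _; rewrite scaler_sumr -big_split /=; apply: eq_bigr => j _.
by rewrite wop_lin scalerDr !scalerA mulrC.
Qed.

Lemma rho0_linX (X Y : 'M[C]_n.+1) (a b : C) phi :
  rho0 (a *: X + b *: Y) phi = a *: rho0 X phi + b *: rho0 Y phi.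
Proof.
rewrite !rho0E !scalerN -opprD !scaler_sumr -big_split /=; congr (- _).
apply: eq_bigr => i _; rewrite !scaler_sumr -big_split /=; apply: eq_bigr => j _.
by rewrite !mxE scalerDl !scalerA.
Qed.

End P2.


Section P1.
Variables (C : numClosedFieldType) (n : nat).
Notation PQ := {mpoly C[n + n]}.
Implicit Types u v : PQ.

Definition Bk u v : PQ :=
  \sum_a \sum_b (Lam C a b)%:MP * (mderiv a u * mderiv b v).

Lemma sum_tuple1 (T : finType) (V : zmodType) (F : 1.-tuple T -> V) :
  \sum_t F t = \sum_x F [tuple x].
Proof.
rewrite (reindex (fun x : T => [tuple x])) //=.
exists (fun t => thead t) => t _ //=.
by apply: val_inj; case: t => [[|x [|]]] //=.
Qed.

Lemma Pl1 u v : Pl 1 u v = Bk u v.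
Proof.
rewrite /Pl sum_tuple1; apply: eq_bigr => a _; rewrite sum_tuple1.
apply: eq_bigr => b _; rewrite big_ord1 /dpart /= -mul_mpolyC.
by rewrite (tnth_nth a) (tnth_nth b).
Qed.

Lemma Poisson_Bk u v : Poisson u v = Bk u v.
Proof. exact: Pl1. Qed.

Lemma Lam_ll (a b : 'I_n) : Lam C (lshift n a) (lshift n b) = 0.
Proof. by rewrite /Lam !split_l. Qed.
Lemma Lam_rr (a b : 'I_n) : Lam C (rshift n a) (rshift n b) = 0.
Proof. by rewrite /Lam !split_r. Qed.
Lemma Lam_lr (a b : 'I_n) : Lam C (lshift n a) (rshift n b) = (a == b)%:R.
Proof. by rewrite /Lam split_l split_r. Qed.
Lemma Lam_rl (a b : 'I_n) : Lam C (rshift n a) (lshift n b) = - (a == b)%:R.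
Proof. by rewrite /Lam split_l split_r. Qed.

Lemma Lam_anti (a b : 'I_(n + n)) : Lam C b a = - Lam C a b.
Proof.
elim/split_cases: a => a; elim/split_cases: b => b.
- by rewrite !Lam_ll oppr0.
- by rewrite Lam_rl Lam_lr eq_sym.
- by rewrite Lam_rl Lam_lr eq_sym opprK.
- by rewrite !Lam_rr oppr0.
Qed.

Lemma Bk_anti u v : Bk v u = - Bk u v.
Proof.
rewrite /Bk exchange_big -sumrN; apply: eq_bigr => a _; rewrite -sumrN.
apply: eq_bigr => b _; rewrite Lam_anti rmorphN /=; ring.
Qed.

Lemma BkMl u1 u2 v : Bk (u1 * u2) v = u2 * Bk u1 v + u1 * Bk u2 v.
Proof.
rewrite /Bk !mulr_sumr -big_split /=; apply: eq_bigr => a _.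
rewrite !mulr_sumr -big_split /=; apply: eq_bigr => b _.
rewrite mderivM; ring.
Qed.

Lemma BkMr u v1 v2 : Bk u (v1 * v2) = v2 * Bk u v1 + v1 * Bk u v2.
Proof. by rewrite Bk_anti BkMl (Bk_anti v1 u) (Bk_anti v2 u); ring. Qed.

Lemma BkDl u1 u2 v : Bk (u1 + u2) v = Bk u1 v + Bk u2 v.
Proof.
rewrite /Bk -big_split /=; apply: eq_bigr => a _; rewrite -big_split /=.
by apply: eq_bigr => b _; rewrite mderivD; ring.
Qed.

Lemma BkDr u v1 v2 : Bk u (v1 + v2) = Bk u v1 + Bk u v2.
Proof. by rewrite Bk_anti BkDl (Bk_anti v1 u) (Bk_anti v2 u) opprD. Qed.

Lemma BkZl (c : C) u v : Bk (c *: u) v = c *: Bk u v.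
Proof.
rewrite /Bk scaler_sumr; apply: eq_bigr => a _; rewrite scaler_sumr.
by apply: eq_bigr => b _; rewrite mderivZ !scaleMP; ring.
Qed.

Lemma BkZr (c : C) u v : Bk u (c *: v) = c *: Bk u v.
Proof. by rewrite Bk_anti BkZl (Bk_anti v u) scalerN. Qed.

Lemma Bk0l v : Bk 0 v = 0.
Proof. by have := BkZl 0 0 v; rewrite !scale0r. Qed.

Lemma BkNl u v : Bk (- u) v = - Bk u v.
Proof. by rewrite -scaleN1r BkZl scaleN1r. Qed.
Lemma BkNr u v : Bk u (- v) = - Bk u v.
Proof. by rewrite -scaleN1r BkZr scaleN1r. Qed.

Lemma Bk_suml I (r : seq I) (P : pred I) (F : I -> PQ) v :
  Bk (\sum_(i <- r | P i) F i) v = \sum_(i <- r | P i) Bk (F i) v.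
Proof. by apply: (big_morph (fun u => Bk u v)) => [x y|]; rewrite ?BkDl ?Bk0l. Qed.

Lemma Bk_sumr I (r : seq I) (P : pred I) (F : I -> PQ) u :
  Bk u (\sum_(i <- r | P i) F i) = \sum_(i <- r | P i) Bk u (F i).
Proof.
rewrite Bk_anti Bk_suml -sumrN; apply: eq_bigr => i _; by rewrite (Bk_anti u) opprK.
Qed.

Lemma BkC (c : C) v : Bk c%:MP v = 0.
Proof. by rewrite /Bk big1 // => a _; rewrite big1 // => b _; rewrite mderivC !mul0r mulr0. Qed.

Lemma Bk_XX (x y : 'I_(n + n)) : Bk 'X_x 'X_y = (Lam C x y)%:MP.
Proof.
rewrite /Bk (bigD1 x) //= [X in _ + X]big1 ?addr0; last first.
  move=> a ne; rewrite big1 // => b _.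
  by rewrite mderivXU eq_sym (negbTE ne) mul0r mulr0.
rewrite (bigD1 y) //= [X in _ + X]big1 ?addr0; last first.
  by move=> b ne; rewrite !mderivXU eqxx eq_sym (negbTE ne) mulr0 mulr0.
by rewrite !mderivXU !eqxx /= !mulr1.
Qed.

Lemma Bk_uu u : Bk u u = 0.
Proof.
have h : Bk u u *+ 2 = 0 by rewrite mulr2n {1}Bk_anti addNr.
have h2 : (2%:R : C) != 0 by rewrite pnatr_eq0.
by rewrite -[Bk u u]scale1r -(mulVf h2) -scalerA scaler_nat h scaler0.
Qed.

Lemma col_lift (a : 'I_n) : psi_col C (lift ord0 a) = 'X_(lshift n a).
Proof. by rewrite /psi_col liftK. Qed.
Lemma col0 : psi_col C (ord0 : 'I_n.+1) = 1.
Proof. by rewrite /psi_col unlift_none. Qed.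
Lemma row_lift (a : 'I_n) : psi_row C (lift ord0 a) = 'X_(rshift n a).
Proof. by rewrite /psi_row liftK. Qed.
Lemma row0 : psi_row C (ord0 : 'I_n.+1) =
  - \sum_(k < n) 'X_(lshift n k) * 'X_(rshift n k).
Proof. by rewrite /psi_row unlift_none. Qed.

Lemma Bk1 v : Bk 1 v = 0.
Proof. by rewrite -mpolyC1 BkC. Qed.

Lemma Bk_l_row0 (a : 'I_n) :
  Bk 'X_(lshift n a) (- \sum_(k < n) 'X_(lshift n k) * 'X_(rshift n k)) = - 'X_(lshift n a).
Proof.
rewrite BkNr Bk_sumr; congr (- _).
rewrite (eq_bigr (fun k => (a == k)%:R * 'X_(lshift n k))) => [|k _]; last first.
  by rewrite BkMr !Bk_XX Lam_ll Lam_lr mpolyC0 mpolyC_nat; ring.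
rewrite (bigD1 a) //= eqxx mul1r big1 ?addr0 // => k /negbTE.
by rewrite eq_sym => ->; rewrite mul0r.
Qed.

Lemma Bk_r_row0 (a : 'I_n) :
  Bk 'X_(rshift n a) (- \sum_(k < n) 'X_(lshift n k) * 'X_(rshift n k)) = 'X_(rshift n a).
Proof.
rewrite BkNr Bk_sumr -sumrN.
rewrite (eq_bigr (fun k => (a == k)%:R * 'X_(rshift n k))) => [|k _]; last first.
  by rewrite BkMr !Bk_XX Lam_rr Lam_rl mpolyC0 rmorphN /= mpolyC_nat; ring.
rewrite (bigD1 a) //= eqxx mul1r big1 ?addr0 // => k /negbTE.
by rewrite eq_sym => ->; rewrite mul0r.
Qed.

Lemma Bcc (i k : 'I_n.+1) : Bk (psi_col C i) (psi_col C k) = 0.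
Proof.
case: (unliftP ord0 i) => [a ->|->]; last by rewrite col0 Bk1.
case: (unliftP ord0 k) => [b ->|->]; last by rewrite col0 -mpolyC1 Bk_anti BkC oppr0.
by rewrite !col_lift Bk_XX Lam_ll mpolyC0.
Qed.

Lemma Bcr (i l : 'I_n.+1) :
  Bk (psi_col C i) (psi_row C l) = (i == l)%:R - (l == ord0)%:R * psi_col C i.
Proof.
case: (unliftP ord0 i) => [a ->|->]; last first.
  by rewrite col0 Bk1 eq_sym; case: (l == ord0); rewrite /= ?mulr1 ?mulr0 subrr.
case: (unliftP ord0 l) => [b ->|->].
  by rewrite col_lift row_lift Bk_XX Lam_lr (inj_eq lift_inj) lift_neq mpolyC_nat mul0r subr0.
by rewrite col_lift row0 Bk_l_row0 lift_neq eqxx mul1r sub0r.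
Qed.

Lemma Brr (j l : 'I_n.+1) :
  Bk (psi_row C j) (psi_row C l) =
  (l == ord0)%:R * psi_row C j - (j == ord0)%:R * psi_row C l.
Proof.
case: (unliftP ord0 j) => [a ->|->]; case: (unliftP ord0 l) => [b ->|->].
- by rewrite !row_lift Bk_XX Lam_rr mpolyC0 !lift_neq !mul0r subrr.
- by rewrite row_lift row0 Bk_r_row0 lift_neq eqxx mul1r mul0r subr0.
- by rewrite row_lift row0 Bk_anti Bk_r_row0 lift_neq eqxx mul1r mul0r sub0r.
- by rewrite Bk_uu eqxx subrr.
Qed.

Lemma Bee (i j k l : 'I_n.+1) :
  Bk (psi_col C i * psi_row C j) (psi_col C k * psi_row C l) =
  (psi_col C k * psi_row C j) *+ (i == l) - (psi_col C i * psi_row C l) *+ (k == j).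
Proof.
rewrite BkMl (BkMr (psi_col C i)) (BkMr (psi_row C j)).
rewrite (Bk_anti (psi_col C k) (psi_row C j)) Bcc !Bcr Brr.
rewrite -(mulr_natl _ (i == l)) -(mulr_natl _ (k == j)); ring.
Qed.

Lemma tilde_bracket (X Y : 'M[C]_n.+1) :
  Bk (tilde X) (tilde Y) = tilde (X *m Y - Y *m X).
Proof.
pose e (i l : 'I_n.+1) := psi_col C i * psi_row C l.
have E : Bk (tilde X) (tilde Y) = - \sum_i \sum_j \sum_k \sum_l
   (X j i * Y l k) *: (e i l *+ (j == k) - e k j *+ (l == i)).
  rewrite !tildeE Bk_suml -sumrN; apply: eq_bigr => i _.
  rewrite Bk_suml -sumrN; apply: eq_bigr => j _.
  rewrite BkZl Bk_sumr scaler_sumr -sumrN; apply: eq_bigr => k _.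
  rewrite Bk_sumr scaler_sumr -sumrN; apply: eq_bigr => l _.
  rewrite BkZr Bee scalerA -scalerN opprB (eq_sym i l) (eq_sym k j) //.
rewrite E quad opprB tildeE -sumrB; apply: eq_bigr => i _.
rewrite -sumrB; apply: eq_bigr => j _.
by rewrite !mxE scalerBl.
Qed.

Definition qdeg (m : 'X_{1..n + n}) : nat := \sum_(k < n) m (rshift n k).
Definition Qd (d : nat) u := forall m, m \in msupp u -> qdeg m = d.
Definition isq (i : 'I_(n + n)) : bool := if split i is inr _ then true else false.

Lemma qdegD m1 m2 : qdeg (m1 + m2)%MM = (qdeg m1 + qdeg m2)%N.
Proof. by rewrite /qdeg -big_split /=; apply: eq_bigr => k _; rewrite mnmDE. Qed.

Lemma qdeg_l (a : 'I_n) : qdeg U_(lshift n a)%MM = 0%N.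
Proof. by rewrite /qdeg big1 // => k _; rewrite mnm1E eq_lrshift. Qed.

Lemma qdeg_r (b : 'I_n) : qdeg U_(rshift n b)%MM = 1%N.
Proof.
rewrite /qdeg (bigD1 b) //= mnm1E eqxx big1 // => k /negbTE ne.
by rewrite mnm1E eq_rshift eq_sym ne.
Qed.

Lemma Qd0 d : Qd d 0.
Proof. by move=> m; rewrite msupp0. Qed.

Lemma QdD d u v : Qd d u -> Qd d v -> Qd d (u + v).
Proof. by move=> hu hv m /msuppD_le; rewrite mem_cat => /orP[/hu|/hv]. Qed.

Lemma QdZ d (c : C) u : Qd d u -> Qd d (c *: u).
Proof. by move=> hu m /msuppZ_le /hu. Qed.

Lemma QdN d u : Qd d u -> Qd d (- u).
Proof. by move=> hu; rewrite -scaleN1r; apply: QdZ. Qed.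

Lemma Qd_sum d I (r : seq I) (P : pred I) (F : I -> PQ) :
  (forall i, P i -> Qd d (F i)) -> Qd d (\sum_(i <- r | P i) F i).
Proof.
move=> H; elim/big_ind: _ => //; [exact: Qd0 | by move=> x y; apply: QdD].
Qed.

Lemma QdX d m : qdeg m = d -> Qd d 'X_[m].
Proof. by move=> h m'; rewrite msuppX inE => /eqP ->. Qed.

Lemma Qd_row0 : Qd 1 (- \sum_(k < n) 'X_(lshift n k) * 'X_(rshift n k)).
Proof.
apply: QdN; apply: Qd_sum => k _; rewrite -mpolyXD; apply: QdX.
by rewrite qdegD qdeg_l qdeg_r.
Qed.

Lemma Qd_tilde (X : 'M[C]_n.+1) : Qd 1 (tilde X).
Proof.
rewrite tildeE; apply: Qd_sum => i _; apply: Qd_sum => j _; apply: QdZ.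
case: (unliftP ord0 i) => [a ->|->]; case: (unliftP ord0 j) => [b ->|->].
- rewrite col_lift row_lift -mpolyXD; apply: QdX; by rewrite qdegD qdeg_l qdeg_r.
- rewrite col_lift row0 mulrN mulr_sumr; apply: QdN; apply: Qd_sum => k _.
  rewrite -!mpolyXD; apply: QdX; by rewrite !qdegD !qdeg_l qdeg_r.
- rewrite col0 row_lift mul1r; apply: QdX; by rewrite qdeg_r.
- rewrite col0 row0 mul1r; exact: Qd_row0.
Qed.

Lemma Qd_dl d u (a : 'I_n) : Qd d u -> Qd d (mderiv (lshift n a) u).
Proof.
move=> hu m; rewrite mcoeff_msupp mcoeff_deriv => h.
have : (m + U_(lshift n a))%MM \in msupp u.
  by rewrite mcoeff_msupp; apply: contraNneq h => ->; rewrite mul0rn.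
by move/hu; rewrite qdegD qdeg_l addn0.
Qed.

Lemma Qd_dr d u (b : 'I_n) : Qd d.+1 u -> Qd d (mderiv (rshift n b) u).
Proof.
move=> hu m; rewrite mcoeff_msupp mcoeff_deriv => h.
have : (m + U_(rshift n b))%MM \in msupp u.
  by rewrite mcoeff_msupp; apply: contraNneq h => ->; rewrite mul0rn.
by move/hu; rewrite qdegD qdeg_r addn1 => -[].
Qed.

Lemma Qd_dr0 u (b : 'I_n) : Qd 0 u -> mderiv (rshift n b) u = 0.
Proof.
move=> hu; apply/mpolyP => m; rewrite mcoeff_deriv mcoeff0.
case: (boolP ((m + U_(rshift n b))%MM \in msupp u)) => [/hu|/memN_msupp_eq0 ->].
  by rewrite qdegD qdeg_r addn1.
by rewrite mul0rn.
Qed.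

Lemma dpart_Q (s : seq 'I_(n + n)) d u : Qd d u ->
  (count isq s <= d)%N -> Qd (d - count isq s) (foldr (fun i p => mderiv i p) u s).
Proof.
move=> hu; elim: s => [|i s IH] /=; first by rewrite subn0.
elim/split_cases: i => a; rewrite /isq ?split_l ?split_r /= => h.
  by rewrite add0n in h *; apply: Qd_dl; apply: IH.
have h' : (count isq s <= d)%N by rewrite /isq; lia.
have := IH h'; have -> : (d - count isq s = (d - (1 + count isq s)).+1)%N.
  by rewrite /isq in h *; lia.
exact: Qd_dr.
Qed.

Lemma dpart_0 (s : seq 'I_(n + n)) d u : Qd d u ->
  (d < count isq s)%N -> foldr (fun i p => mderiv i p) u s = 0.
Proof.
move=> hu; elim: s => [|i s IH] //=.
case: (ltnP d (count isq s)) => [/IH -> _|hle]; first by rewrite mderiv0.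
elim/split_cases: i => a; rewrite /isq ?split_l ?split_r /= => h.
  by rewrite /isq in hle; lia.
have hd : d = count isq s by rewrite /isq in hle h *; lia.
apply: Qd_dr0; have := dpart_Q hu hle; by rewrite -hd subnn.
Qed.

Lemma Lam_isq x y : Lam C x y != 0 -> isq x = ~~ isq y.
Proof.
elim/split_cases: x => a; elim/split_cases: y => b;
  rewrite /isq ?split_l ?split_r //= ?Lam_ll ?Lam_rr ?eqxx //.
Qed.

Lemma count_tuple l (t : l.-tuple 'I_(n + n)) :
  count isq t = \sum_(k < l) (isq (tnth t k) : nat).
Proof.
rewrite -sum1_count big_tuple big_mkcond /=; apply: eq_bigr => k _.
by case: (isq _).
Qed.

Lemma Pl_high l u v : Qd 1 u -> Qd 1 v -> (3 <= l)%N -> Pl l u v = 0.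
Proof.
move=> hu hv hl; rewrite /Pl big1 // => I _; rewrite big1 // => J _.
case: (boolP [forall k, Lam C (tnth I k) (tnth J k) != 0]) => [/forallP H|].
  have cnt : (count isq I + count isq J = l)%N.
    rewrite !count_tuple -big_split /=.
    rewrite (eq_bigr (fun _ => 1%N)) ?sum1_card ?card_ord // => k _.
    by rewrite (Lam_isq (H k)); case: (isq _).
  case: (ltnP 1 (count isq I)) => h1.
    by rewrite /dpart (dpart_0 hu h1) mul0r scaler0.
  have h2 : (1 < count isq J)%N by lia.
  by rewrite /dpart (dpart_0 hv h2) mulr0 scaler0.
move=> /forallPn [k /negPn /eqP H0].
by rewrite (bigD1 k) //= H0 mul0r scale0r.
Qed.

Lemma Moyal_Poisson u v : Qd 1 u -> Qd 1 v -> Moyal u v = Poisson u v.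
Proof.
move=> hu hv; rewrite /Moyal Poisson_Bk.
case E: (msize u + msize v)%N => [|N].
  have : msize u = 0%N by lia.
  by move/eqP; rewrite msize_poly_eq0 => /eqP ->; rewrite big_ord0 Bk0l.
rewrite big_ord_recl /= big1 ?addr0 => [|i _]; last first.
  by rewrite Pl_high ?scaler0 // /bump; lia.
by rewrite expr0 div1r /= invr1 scale1r Pl1.
Qed.

End P1.

End Aux.
Import Aux.

Theorem proposition6p1 (C : numClosedFieldType) (n : nat) (hn : (1 <= n)%N) :
  (* (1) *)
  (forall X Y : 'M[C]_n.+1, \tr X = 0 -> \tr Y = 0 ->
     Moyal (tilde X) (tilde Y) = Poisson (tilde X) (tilde Y) /\
     Poisson (tilde X) (tilde Y) = tilde (X *m Y - Y *m X)) /\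
  (* (2) each rho_0(X) is a linear operator on P *)
  (forall (X : 'M[C]_n.+1) (a : C) (phi psi : {mpoly C[n]}), \tr X = 0 ->
     rho0 X (a *: phi + psi) = a *: rho0 X phi + rho0 X psi) /\
  (* rho_0 is linear in X *)
  (forall (X Y : 'M[C]_n.+1) (a b : C) (phi : {mpoly C[n]}),
     \tr X = 0 -> \tr Y = 0 ->
     rho0 (a *: X + b *: Y) phi = a *: rho0 X phi + b *: rho0 Y phi) /\
  (* rho_0 preserves brackets *)
  (forall (X Y : 'M[C]_n.+1) (phi : {mpoly C[n]}), \tr X = 0 -> \tr Y = 0 ->
     rho0 (X *m Y - Y *m X) phi = rho0 X (rho0 Y phi) - rho0 Y (rho0 X phi)).
Proof.
split.
  move=> X Y _ _; split; first by apply: Moyal_Poisson; apply: Qd_tilde.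
  by rewrite Poisson_Bk tilde_bracket.
split; first by move=> X a phi psi _; exact: rho0_linphi.
split; first by move=> X Y a b phi _ _; exact: rho0_linX.
by move=> X Y phi _ _; exact: rho0_bracket.
Qed.
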